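(* Let $S$ be an infinite set, viewed as a structure $\mathcal{S}$ in the empty signature (only equality), and let $I$ be the set of nonempty finite subsets of $S$, ordered by inclusion, each viewed as a substructure. Then $\lim_I\mathrm{Th}(F^* )=\mathrm{Th}(\mathcal{S}^* )$, where $F$ ranges over $I$.
   Context: For a structure $\mathcal{T}$ with universe $T$, $\mathrm{Th}(\mathcal{T}^* )$ is the set of first-order sentences (in pure equality logic) with a constant for each element of $T$ that are true in $\mathcal{T}$; these are regarded as subsets of the set of sentences with constants from $S$. For a family $\{\Delta_i\}_{i\in I}$ indexed by a directed set: $\limsup_I \Delta_i=\{\theta: \forall i\ \exists j\ge i\ [\theta\in\Delta_j]\}$, $\liminf_I \Delta_i=\{\theta: \exists i\ \forall j\ge i\ [\theta\in\Delta_j]\}$, and $\lim_I\Delta_i=\Delta$ means both equal $\Delta$. *)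

(* Defs.v *)
From Stdlib Require Import List.
Import ListNotations.

Section FOL.
Variable S : Type.

Inductive term : Type :=
| tvar : nat -> term
| tconst : S -> term.

Inductive form : Type :=
| fEq : term -> term -> form
| fFalse : form
| fNot : form -> form
| fAnd : form -> form -> form
| fOr : form -> form -> form
| fImp : form -> form -> form
| fAll : nat -> form -> form
| fEx : nat -> form -> form.

Definition term_fv (t : term) : list nat :=
  match t with tvar n => [n] | tconst _ => [] end.

Fixpoint fv (f : form) : list nat :=
  match f with
  | fEq t u => term_fv t ++ term_fv u
  | fFalse => []
  | fNot g => fv g
  | fAnd g h | fOr g h | fImp g h => fv g ++ fv h
  | fAll n g | fEx n g => filter (fun m => negb (Nat.eqb m n)) (fv g)
  end.

Definition term_consts (t : term) : list S :=
  match t with tvar _ => [] | tconst c => [c] end.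

Fixpoint consts (f : form) : list S :=
  match f with
  | fEq t u => term_consts t ++ term_consts u
  | fFalse => []
  | fNot g => consts g
  | fAnd g h | fOr g h | fImp g h => consts g ++ consts h
  | fAll _ g | fEx _ g => consts g
  end.

Definition sentence (f : form) : Prop := fv f = [].

Definition upd (v : nat -> S) (n : nat) (a : S) : nat -> S :=
  fun m => if Nat.eqb m n then a else v m.

Definition teval (v : nat -> S) (t : term) : S :=
  match t with tvar n => v n | tconst c => c end.

Fixpoint sat (U : S -> Prop) (v : nat -> S) (f : form) : Prop :=
  match f with
  | fEq t u => teval v t = teval v u
  | fFalse => False
  | fNot g => ~ sat U v g
  | fAnd g h => sat U v g /\ sat U v h
  | fOr g h => sat U v g \/ sat U v h
  | fImp g h => sat U v g -> sat U v h
  | fAll n g => forall a, U a -> sat U (upd v n a) g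
  | fEx n g => exists a, U a /\ sat U (upd v n a) g
  end.

(* Th(U^* ): sentences whose constants name elements of U and which are
   true in the structure with universe U. *)
Definition Th (U : S -> Prop) (f : form) : Prop :=
  sentence f /\ (forall c, In c (consts f) -> U c) /\
  (forall v : nat -> S, (forall n, U (v n)) -> sat U v f).

End FOL.

Arguments tvar {S}. Arguments tconst {S}.
Arguments fFalse {S}.

Definition limsup {X A : Type} (inI : X -> Prop) (le : X -> X -> Prop)
  (D : X -> A -> Prop) (th : A) : Prop :=
  forall i, inI i -> exists j, inI j /\ le i j /\ D j th.

Definition liminf {X A : Type} (inI : X -> Prop) (le : X -> X -> Prop)
  (D : X -> A -> Prop) (th : A) : Prop :=
  exists i, inI i /\ forall j, inI j -> le i j -> D j th.

Definition is_lim {X A : Type} (inI : X -> Prop) (le : X -> X -> Prop)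
  (D : X -> A -> Prop) (L : A -> Prop) : Prop :=
  (forall th, limsup inI le D th <-> L th) /\
  (forall th, liminf inI le D th <-> L th).

Definition infinite_type (S : Type) : Prop :=
  ~ exists l : list S, forall x : S, In x l.

Definition finite_nonempty_subset {S : Type} (F : S -> Prop) : Prop :=
  (exists l : list S, forall x, F x <-> In x l) /\ (exists x, F x).

Definition subset_le {S : Type} (F G : S -> Prop) : Prop :=
  forall x, F x -> G x.

(* Main.v *)
Require Import Defs.
From Stdlib Require Import List.
From Stdlib Require Import Classical Lia Arith.
Import ListNotations.

Section Aux.
Variable S : Type.

Fixpoint qd (f : form S) : nat :=
  match f with
  | fEq _ _ _ | fFalse => 0
  | fNot _ g => qd g
  | fAnd _ g h | fOr _ g h | fImp _ g h => max (qd g) (qd h)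
  | fAll _ _ g | fEx _ _ g => 1 + qd g
  end.

Definition tok (X : list nat) (C : list S) (t : term S) : Prop :=
  match t with tvar m => In m X | tconst c => In c C end.

Definition corr X C (v w : nat -> S) := forall t u, tok X C t -> tok X C u ->
  (teval S v t = teval S v u <-> teval S w t = teval S w u).

Definition Rich (U : S -> Prop) N := forall L : list S, length L < N -> exists a, U a /\ ~ In a L.

Lemma corr_sym X C v w : corr X C v w -> corr X C w v.
Proof. intros H t u ht hu. symmetry. now apply H. Qed.

Lemma corr_upd X C v w n a b :
  corr X C v w ->
  (forall m, In m X -> m <> n -> (a = v m <-> b = w m)) ->
  (forall c, In c C -> (a = c <-> b = c)) ->
  corr (n :: X) C (upd S v n a) (upd S w n b).
Proof.
  intros H K1 K2 t u ht hu.
  destruct t as [m|c]; destruct u as [m'|c']; simpl in *; unfold upd;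
  try destruct (Nat.eqb_spec m n); try destruct (Nat.eqb_spec m' n); subst;
  try (destruct ht as [ht|ht]; [congruence|]);
  try (destruct hu as [hu|hu]; [congruence|]).
  all: first
    [ tauto
    | apply K1; now auto
    | apply K2; now auto
    | (split; intro E; symmetry; first [apply K1|apply K2]; auto; symmetry; auto; fail)
    | (specialize (K1 _ ht n0); split; intro E; symmetry; apply K1; auto)
    | (specialize (K1 _ hu n0); split; intro E; symmetry; apply K1; auto)
    | (specialize (K2 _ ht); split; intro E; symmetry; apply K2; auto)
    | (specialize (K2 _ hu); split; intro E; symmetry; apply K2; auto)
    | (apply (H (tvar _) (tvar _)); now auto)
    | (apply (H (tvar _) (tconst _)); now auto)
    | (apply (H (tconst _) (tvar _)); now auto)
    | (apply (H (tconst _) (tconst _)); now auto) ].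
Qed.

Lemma ext (V : S -> Prop) N X C v w n a :
  Rich V N -> length X + length C < N ->
  (forall m, V (w m)) -> (forall c, In c C -> V c) ->
  corr X C v w -> exists b, V b /\ corr (n :: X) C (upd S v n a) (upd S w n b).
Proof.
  intros RV Hl Vw VC H.
  destruct (classic (exists m, In m X /\ m <> n /\ a = v m)) as [[m [hm [hn ha]]]|N1].
  { exists (w m). split; auto. subst a. apply corr_upd; auto.
    - intros m' h1 h2. apply (H (tvar m) (tvar m')); auto.
    - intros c hc. apply (H (tvar m) (tconst c)); auto. }
  destruct (classic (In a C)) as [hC|hC].
  { exists a. split; auto. apply corr_upd; auto.
    - intros m' h1 h2. apply (H (tconst a) (tvar m')); auto.
    - tauto. }
  destruct (RV (map w X ++ C)) as [b [Vb hb]].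
  { rewrite length_app, length_map. lia. }
  exists b. split; auto. apply corr_upd; auto.
  - intros m' h1 h2. split; intro E.
    + exfalso. apply N1. eauto.
    + exfalso. apply hb. apply in_or_app. left. subst. apply in_map. auto.
  - intros c hc. split; intro E.
    + subst. contradiction.
    + subst. exfalso. apply hb. apply in_or_app. auto.
Qed.

Lemma fv_bind n g X : incl (filter (fun m => negb (Nat.eqb m n)) (fv S g)) X ->
  incl (fv S g) (n :: X).
Proof.
  intros H x hx. destruct (Nat.eqb_spec x n).
  - left; auto.
  - right. apply H. apply filter_In. split; auto. apply Nat.eqb_neq in n0. now rewrite n0.
Qed.

Lemma mainlem U V N C (RU : Rich U N) (RV : Rich V N)
  (CU : forall c, In c C -> U c) (CV : forall c, In c C -> V c) :
  forall f X v w, (forall m, U (v m)) -> (forall m, V (w m)) -> corr X C v w ->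
  incl (fv S f) X -> incl (consts S f) C -> length X + length C + qd f <= N ->
  (sat S U v f <-> sat S V w f).
Proof.
  induction f as [t u| |g IH|g IHg h IHh|g IHg h IHh|g IHg h IHh|n g IH|n g IH];
    intros X v w Uv Vw H hfv hc hl; simpl in *.
  - apply H.
    + destruct t; simpl in *; [apply hfv|apply hc]; try (apply in_or_app; left); simpl; auto.
    + destruct u; simpl in *; [apply hfv|apply hc]; try (apply in_or_app; right); simpl; auto.
  - tauto.
  - rewrite (IH X v w); auto. tauto.
  - apply incl_app_inv in hfv as [f1 f2]. apply incl_app_inv in hc as [c1 c2].
    rewrite (IHg X v w), (IHh X v w); auto; try tauto; lia.
  - apply incl_app_inv in hfv as [f1 f2]. apply incl_app_inv in hc as [c1 c2].
    rewrite (IHg X v w), (IHh X v w); auto; try tauto; lia.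
  - apply incl_app_inv in hfv as [f1 f2]. apply incl_app_inv in hc as [c1 c2].
    rewrite (IHg X v w), (IHh X v w); auto; try tauto; lia.
  - apply fv_bind in hfv. split.
    + intros Hs b Vb.
      destruct (ext U N X C w v n b RU ltac:(lia) Uv CU (corr_sym _ _ _ _ H)) as [a [Ua Ha]].
      apply (IH (n :: X) (upd S v n a) (upd S w n b)); auto.
      * intro m; unfold upd; destruct (m =? n); auto.
      * intro m; unfold upd; destruct (m =? n); auto.
      * apply corr_sym; auto.
      * simpl; lia.
    + intros Hs a Ua.
      destruct (ext V N X C v w n a RV ltac:(lia) Vw CV H) as [b [Vb Hb]].
      apply (IH (n :: X) (upd S v n a) (upd S w n b)); auto.
      * intro m; unfold upd; destruct (m =? n); auto.
      * intro m; unfold upd; destruct (m =? n); auto.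
      * simpl; lia.
  - apply fv_bind in hfv. split.
    + intros [a [Ua Hs]].
      destruct (ext V N X C v w n a RV ltac:(lia) Vw CV H) as [b [Vb Hb]].
      exists b; split; auto.
      apply (IH (n :: X) (upd S v n a) (upd S w n b)); auto.
      * intro m; unfold upd; destruct (m =? n); auto.
      * intro m; unfold upd; destruct (m =? n); auto.
      * simpl; lia.
    + intros [b [Vb Hs]].
      destruct (ext U N X C w v n b RU ltac:(lia) Uv CU (corr_sym _ _ _ _ H)) as [a [Ua Ha]].
      exists a; split; auto.
      apply (IH (n :: X) (upd S v n a) (upd S w n b)); auto.
      * intro m; unfold upd; destruct (m =? n); auto.
      * intro m; unfold upd; destruct (m =? n); auto.
      * apply corr_sym; auto.
      * simpl; lia.
Qed.

Lemma nodup_list (HS : infinite_type S) : forall n, exists K : list S, NoDup K /\ length K = n.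
Proof.
  induction n as [|n [K [HK HL]]].
  - exists []; split; auto. constructor.
  - destruct (classic (exists x, ~ In x K)) as [[x hx]|hn].
    + exists (x :: K). split; [constructor; auto | simpl; lia].
    + exfalso. apply HS. exists K. intro x. apply NNPP. intro h. apply hn. eauto.
Qed.

Lemma rich_of U K N : NoDup K -> N <= length K -> (forall x, In x K -> U x) -> Rich U N.
Proof.
  intros HK hl HU L hL.
  destruct (classic (exists a, In a K /\ ~ In a L)) as [[a [h1 h2]]|hn].
  - exists a; auto.
  - exfalso. assert (incl K L).
    { intros x hx. apply NNPP. intro h. apply hn. eauto. }
    pose proof (NoDup_incl_length HK H). lia.
Qed.

Lemma rich_all (HS : infinite_type S) N : Rich (fun _ => True) N.
Proof.
  intros L _. destruct (classic (exists a, ~ In a L)) as [[a h]|hn].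
  - exists a; auto.
  - exfalso. apply HS. exists L. intro x. apply NNPP. intro h. apply hn; eauto.
Qed.

Lemma equiv_Th (HS : infinite_type S) th K U :
  sentence S th ->
  NoDup K -> length K = length (consts S th) + qd th + 1 ->
  (forall c, In c (consts S th) -> U c) -> (forall x, In x K -> U x) ->
  (Th S U th <-> Th S (fun _ => True) th).
Proof.
  intros Hsent HK hl HC HUK.
  set (N := length (consts S th) + qd th).
  assert (RU : Rich U N) by (apply (rich_of U K); auto; lia).
  assert (RT : Rich (fun _ => True) N) by (apply rich_all; auto).
  assert (Hk : forall v w, (forall m, U (v m)) ->
     (sat S U v th <-> sat S (fun _ => True) w th)).
  { intros v w Uv. apply (mainlem U _ N (consts S th) RU RT HC (fun _ _ => I) th []).
    - exact Uv.
    - intros; exact I.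
    - intros t u ht hu. destruct t; destruct u; simpl in *; try contradiction. tauto.
    - unfold sentence in Hsent. rewrite Hsent. apply incl_refl.
    - apply incl_refl.
    - simpl. unfold N. lia. }
  destruct K as [|x0 K']; [simpl in hl; lia|].
  assert (U0 : U x0) by (apply HUK; left; auto).
  split.
  - intros [h1 [h2 h3]]. split; auto. split; auto. intros w _.
    apply (Hk (fun _ => x0)); auto.
  - intros [h1 [h2 h3]]. split; auto. split; auto. intros v Uv.
    apply (Hk v v); auto.
Qed.

End Aux.

Theorem mainTheorem10 (S : Type) (HS : infinite_type S) :
  is_lim (@finite_nonempty_subset S) (@subset_le S)
    (fun F => Th S F) (Th S (fun _ => True)).
Proof.
  assert (Key : forall th, exists K : list S, NoDup K /\ length K = length (consts S th) + qd S th + 1)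
    by (intro th; apply nodup_list; auto).
  assert (Fin : forall l : list S, (exists x, In x l) -> finite_nonempty_subset (fun x => In x l)).
  { intros l [x hx]. split; eauto. exists l; tauto. }
  split; intro th; destruct (Key th) as [K [HK hl]];
  destruct K as [|x0 K']; try (simpl in hl; lia); set (K := x0 :: K') in *.
  - split.
    + intros H. destruct (H (fun x => In x (consts S th ++ K))) as [j [[[lj Hj] _] [hij Hth]]].
      { apply Fin. exists x0. apply in_or_app; right; left; auto. }
      assert (Hs : sentence S th) by apply Hth.
      apply (equiv_Th S HS th K j Hs HK hl); auto.
      * intros c hc. apply hij. apply in_or_app; auto.
      * intros x hx. apply hij. apply in_or_app; auto.
    + intros H i [[l Hl] [y hy]].
      exists (fun x => In x (l ++ consts S th ++ K)). split; [|split].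
      * apply Fin. exists y. apply in_or_app; left; apply Hl; auto.
      * intros x hx. apply in_or_app; left; apply Hl; auto.
      * apply (equiv_Th S HS th K _ (proj1 H) HK hl); auto.
        -- intros c hc. apply in_or_app; right; apply in_or_app; auto.
        -- intros x hx. apply in_or_app; right; apply in_or_app; auto.
  - split.
    + intros [i [[[l Hl] [y hy]] H]].
      assert (Hth : Th S (fun x => In x (l ++ consts S th ++ K)) th).
      { apply H.
        - apply Fin. exists y. apply in_or_app; left; apply Hl; auto.
        - intros x hx. apply in_or_app; left; apply Hl; auto. }
      apply (equiv_Th S HS th K _ (proj1 Hth) HK hl) in Hth; auto.
      * intros c hc. apply in_or_app; right; apply in_or_app; auto.
      * intros x hx. apply in_or_app; right; apply in_or_app; auto.
    + intros H. exists (fun x => In x (consts S th ++ K)). split.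
      * apply Fin. exists x0. apply in_or_app; right; left; auto.
      * intros j _ hij. apply (equiv_Th S HS th K _ (proj1 H) HK hl); auto.
        -- intros c hc. apply hij. apply in_or_app; auto.
        -- intros x hx. apply hij. apply in_or_app; auto.
Qed.
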